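(* Let $X$ be a regular topological space. Then $X$ is $Scat(X)$-selectively pseudocompact if and only if $X$ is $Disc(X)$-selectively pseudocompact, where $Scat(X)$ is the family of scattered subsets of $X$ and $Disc(X)$ is the family of discrete subsets of $X$.
   Context: For a topological space $X$ and $\mathcal A\subseteq\mathcal P(X)$, $X$ is called $\mathcal A$-selectively pseudocompact if for every sequence $\langle U_n:n\in\omega\rangle$ of pairwise disjoint non-empty open subsets of $X$ one can choose sets $A_n\in\mathcal A$ with $A_n\subseteq U_n$ such that the family $\{A_n:n\in\omega\}$ has an accumulation point, i.e. there is a point $x\in X$ every neighbourhood of which meets $A_n$ for infinitely many $n$. A subset $Y\subseteq X$ is discrete if it is discrete in the subspace topology, and scattered if every non-empty subset of $Y$ has a point isolated in it. *)

(* Defs.v *)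
From HB Require Import structures.
From mathcomp Require Import all_boot all_order all_algebra.
From mathcomp Require Import all_classical all_reals all_analysis.
Set Implicit Arguments. Unset Strict Implicit. Unset Printing Implicit Defensive.
Local Open Scope classical_set_scope.

Definition isolated_in {T : topologicalType} (B : set T) (y : T) : Prop :=
  B y /\ exists U : set T, open U /\ U y /\ U `&` B = [set y].

Definition discrete_subset {T : topologicalType} (Y : set T) : Prop :=
  forall y, Y y -> isolated_in Y y.

Definition scattered_subset {T : topologicalType} (Y : set T) : Prop :=
  forall B : set T, B `<=` Y -> B !=set0 -> exists y, isolated_in B y.

Definition Disc (T : topologicalType) : set (set T) := [set Y | discrete_subset Y].
Definition Scat (T : topologicalType) : set (set T) := [set Y | scattered_subset Y].

Definition family_accumulation_point {T : topologicalType} (A : nat -> set T) (x : T) : Prop :=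
  forall N : set T, nbhs x N -> infinite_set [set n : nat | N `&` A n !=set0].

Definition selectively_pseudocompact_wrt {T : topologicalType} (F : set (set T)) : Prop :=
  forall U : nat -> set T,
    (forall n, open (U n)) -> (forall n, U n !=set0) ->
    (forall n m, n <> m -> U n `&` U m = set0) ->
    exists A : nat -> set T,
      (forall n, F (A n) /\ A n `<=` U n) /\
      exists x : T, family_accumulation_point A x.

(* Main.v *)
Require Import Defs.
From HB Require Import structures.
From mathcomp Require Import all_boot all_order all_algebra.
From mathcomp Require Import all_classical all_reals all_analysis.
Local Open Scope classical_set_scope.

Lemma disc_scat (X : topologicalType) (Y : set X) :
  discrete_subset Y -> scattered_subset Y.
Proof.
move=> dY B BY [y By]; exists y; split => //.
have [_ [U [oU [Uy UY]]]] := dY y (BY y By).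
exists U; split => //; split => //.
rewrite eqEsubset; split => z.
  by move=> [Uz Bz]; rewrite -UY; split => //; exact: BY.
by move=> ->.
Qed.

Lemma scat_dense (X : topologicalType) (A V : set X) :
  scattered_subset A -> open V -> V `&` A !=set0 ->
  exists y, V y /\ isolated_in A y.
Proof.
move=> sA oV ne.
have [y [[Vy Ay] [W [oW [Wy WVA]]]]] := sA (V `&` A) (@subIsetr _ V A) ne.
exists y; split => //; split => //.
exists (W `&` V); split; first exact: openI.
split => //; rewrite -setIA; exact: WVA.
Qed.

Theorem proposition1p4 (X : topologicalType) :
  regular_space X ->
  (selectively_pseudocompact_wrt (@Scat X) <-> selectively_pseudocompact_wrt (@Disc X)).
Proof.
move=> _; split; last first.
  move=> H U oU neU dU; have [A [HA HX]] := H U oU neU dU.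
  exists A; split => // n; have [dA sA] := HA n; split => //.
  exact: disc_scat.
move=> H U oU neU dU; have [A [HA [x Hx]]] := H U oU neU dU.
exists (fun n => [set y | isolated_in (A n) y]); split.
  move=> n; split.
    move=> y [Ay [W [oW [Wy WA]]]]; split; first by split => //; exists W.
    exists W; split => //; split => //.
    rewrite eqEsubset; split => z.
      by move=> [Wz [Az _]]; rewrite -WA.
    by move=> ->; split => //; split => //; exists W.
  by move=> y [Ay _]; exact: (proj2 (HA n)).
exists x => N; rewrite nbhsE => -[V [oV Vx] VN].
have := Hx V (open_nbhs_nbhs (conj oV Vx)).
apply: contra_not; apply: sub_finite_set => n /= ne.
have [y [Vy iy]] := @scat_dense X (A n) V (proj1 (HA n)) oV ne.
by exists y; split => //; exact: VN.
Qed.
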